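(* Let $\mathcal Z$ be an instance space, $\mathcal W$ a hypothesis space and $\ell:\mathcal W\times\mathcal Z\to\mathbb R^+$ a non-negative loss. Let $\mu,\mu'$ be probability distributions on $\mathcal Z$ with $\mu\ll\mu'$. Let $S=\{Z_1,\dots,Z_n\}$ be drawn IID from $\mu$, and let $W$ be the output of any learning algorithm described by a conditional distribution $P_{W|S}$ (not necessarily empirical risk minimization), with marginal $P_W$. Let $L_{\mu'}(w)=\mathbb E_{Z\sim\mu'}[\ell(w,Z)]$ and $\hat L(w,S)=\frac1n\sum_{i=1}^n\ell(w,Z_i)$. Assume there are $b_-<0<b_+$ and a function $\psi$ such that under $(W,Z)\sim P_W\otimes\mu'$, $\log\mathbb E[e^{\lambda(\ell(W,Z)-\mathbb E[\ell(W,Z)])}]\le\psi(\lambda)$ for all $\lambda\in(b_-,b_+)$. With $\psi^{*-1}_{-}(x)=\inf_{\lambda\in[0,-b_-)}\frac{x+\psi(-\lambda)}{\lambda}$ and $\psi^{*-1}_{+}(x)=\inf_{\lambda\in[0,b_+)}\frac{x+\psi(\lambda)}{\lambda}$, we have $$\mathbb E_{WS}[L_{\mu'}(W)-\hat L(W,S)]\le\frac1n\sum_{i=1}^n\psi^{*-1}_{-}\big(I(W;Z_i)+D(\mu\|\mu')\big),$$ $$-\mathbb E_{WS}[L_{\mu'}(W)-\hat L(W,S)]\le\frac1n\sum_{i=1}^n\psi^{*-1}_{+}\big(I(W;Z_i)+D(\mu\|\mu')\big).$$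
   Context: $I(\cdot;\cdot)$ is mutual information under the joint distribution of $(W,S)$ given by $P_{W|S}$ and $\mu^{\otimes n}$; $D(\mu\|\mu')$ is the Kullback–Leibler divergence. *)

(* Defs.v *)
From HB Require Import structures.
From mathcomp Require Import all_boot all_order all_algebra.
From mathcomp Require Import all_classical all_reals all_analysis.

Set Implicit Arguments.
Unset Strict Implicit.
Unset Printing Implicit Defensive.

Import Order.TTheory GRing.Theory Num.Theory.
Local Open Scope classical_set_scope.
Local Open Scope ring_scope.

Section pairRV.
Context d d1 d2 (T : measurableType d) (T1 : measurableType d1)
  (T2 : measurableType d2).
Variables (X : {mfun T >-> T1}) (Y : {mfun T >-> T2}).

Definition pairRV : T -> (T1 * T2)%type := fun w => (X w, Y w).

Lemma measurable_pairRV : measurable_fun [set: T] pairRV.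
Proof. exact: measurable_fun_pair. Qed.

HB.instance Definition _ := isMeasurableFun.Build _ _ _ _ pairRV measurable_pairRV.
End pairRV.

Section information.
Local Open Scope ereal_scope.
Context {R : realType}.

Definition KL d (T : measurableType d) (P Q : probability T R) : \bar R :=
  if asbool (P `<< Q) then
    \int[P]_x (ln (fine (Radon_Nikodym (charge_of_finite_measure P) Q x)))%:E
  else +oo.

Definition mutual_info d d1 d2 (T : measurableType d) (T1 : measurableType d1)
  (T2 : measurableType d2) (P : probability T R)
  (X : {mfun T >-> T1}) (Y : {mfun T >-> T2}) : \bar R :=
  KL (distribution P (pairRV X Y)) (distribution P X \x distribution P Y).

Definition mutually_independent d d' (T : measurableType d)
  (T' : measurableType d') (P : probability T R) n
  (X : 'I_n -> {mfun T >-> T'}) : Prop :=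
  forall A : 'I_n -> set T', (forall i, measurable (A i)) ->
    P (\bigcap_(i in [set: 'I_n]) (X i @^-1` A i)) =
    \prod_(i < n) P (X i @^-1` A i).

Definition psi_star_inv_plus (psi : R -> R) (bp : R) (x : \bar R) : \bar R :=
  ereal_inf [set (x + (psi lam)%:E) * (lam^-1)%:E | lam in [set lam | (0 < lam < bp)%R]].

Definition psi_star_inv_minus (psi : R -> R) (bm : R) (x : \bar R) : \bar R :=
  ereal_inf [set (x + (psi (- lam))%:E) * (lam^-1)%:E | lam in [set lam | (0 < lam < - bm)%R]].

End information.

(* Main.v *)
Require Import Defs.
From HB Require Import structures.
From mathcomp Require Import all_boot all_order all_algebra.
From mathcomp Require Import all_classical all_reals all_analysis.
From mathcomp Require Import measurable_realfun.
From mathcomp Require Import ring lra.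
Import Order.TTheory GRing.Theory Num.Theory.
Local Open Scope classical_set_scope.
Local Open Scope ring_scope.

Lemma fin_integrable d (T : measurableType d) (R : realType)
  (mu : {measure set T -> \bar R}) D (f : T -> \bar R) :
  measurable D -> measurable_fun D f -> (\int[mu]_(x in D) f x \is a fin_num)%E ->
  mu.-integrable D f.
Proof.
move=> mD mf fin; apply/integrableP; split => //.
by apply/(abse_integralP mu mD mf); rewrite -fin_num_abs.
Qed.

Section rn.
Local Open Scope ereal_scope.
Context {R : realType} {d} {T : measurableType d}.

Definition rnd (P Q : probability T R) (x : T) : R :=
  fine (Radon_Nikodym (charge_of_finite_measure P) Q x).

Lemma rnd_measurable (P Q : probability T R) : P `<< Q -> measurable_fun setT (rnd P Q).
Proof.
move=> PQ; change (measurable_fun setT (fine \o Radon_Nikodym (charge_of_finite_measure P) Q)).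
apply: (measurableT_comp (measurable_realfun.fine_measurable measurableT)).
apply: measurable_int.
exact: (Radon_Nikodym_integrable (nu := charge_of_finite_measure P)).
Qed.

Lemma rndE (P Q : probability T R) x : P `<< Q ->
  (rnd P Q x)%:E = Radon_Nikodym (charge_of_finite_measure P) Q x.
Proof. by move=> PQ; rewrite /rnd fineK // Radon_Nikodym_fin_num. Qed.

Lemma rnd_int (P Q : probability T R) A : P `<< Q -> measurable A ->
  P A = \int[Q]_(x in A) (rnd P Q x)%:E.
Proof.
move=> PQ mA; transitivity (charge_of_finite_measure P A) => //.
rewrite (Radon_Nikodym_integral (nu := charge_of_finite_measure P) (mu := Q)) //.
by apply: eq_integral => x _; rewrite rndE.
Qed.

Lemma KLE (P Q : probability T R) : P `<< Q ->
  KL P Q = \int[P]_x (ln (rnd P Q x))%:E.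
Proof. by move=> PQ; rewrite /KL asboolT. Qed.


Lemma rnd_cv (P Q : probability T R) (g : T -> \bar R) E : P `<< Q -> measurable E ->
  measurable_fun E g -> (forall x, 0 <= g x) ->
  \int[P]_(x in E) g x = \int[Q]_(x in E) (g x * (rnd P Q x)%:E).
Proof.
move=> PQ mE mg g0.
rewrite -(Radon_Nikodym_SigmaFinite.change_of_variables PQ g0 mE mg).
apply: ae_eq_integral => //.
- apply: emeasurable_funM => //; apply: measurable_funTS.
  exact: measurable_int (Radon_Nikodym_SigmaFinite.f_integrable PQ).
- apply: emeasurable_funM => //; apply: measurableT_comp => //; apply: measurable_funTS.
  exact: rnd_measurable.
- have := ae_eq_Radon_Nikodym_SigmaFinite PQ mE.
  have -> : Radon_Nikodym (charge_of_finite_measure P) Q = (fun x => (rnd P Q x)%:E).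
    by apply/funext => x; rewrite rndE.
  exact: ae_eqe_mul2l.
Qed.

Lemma rnd_le0_meas (P Q : probability T R) : P `<< Q ->
  measurable [set x | rnd P Q x <= 0]%R.
Proof.
move=> PQ; have -> : [set x | rnd P Q x <= 0]%R = rnd P Q @^-1` [set` `]-oo, 0%R]].
  by apply/seteqP; split => x /=; rewrite in_itv.
by rewrite -[X in measurable X]setTI; apply: rnd_measurable.
Qed.

Lemma rnd_null (P Q : probability T R) : P `<< Q ->
  P [set x | rnd P Q x <= 0]%R = 0.
Proof.
move=> PQ; have mN := rnd_le0_meas P Q PQ.
apply/eqP; rewrite eq_le measure_ge0 andbT (rnd_int P Q _ PQ mN).
have iQ : Q.-integrable [set x | rnd P Q x <= 0]%R (fun x => (rnd P Q x)%:E).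
  apply: (integrableS measurableT) => //.
  have -> : (fun x => (rnd P Q x)%:E) = Radon_Nikodym (charge_of_finite_measure P) Q.
    by apply/funext => x; rewrite rndE.
  exact: (Radon_Nikodym_integrable (nu := charge_of_finite_measure P)).
rewrite -(integral0 Q [set x | rnd P Q x <= 0]%R).
apply: le_integral => //; first exact: integrable0.
by move=> x; rewrite inE /= lee_fin.
Qed.


Lemma ln_rnd_measurable (P Q : probability T R) : P `<< Q ->
  measurable_fun setT (fun x => ln (rnd P Q x)).
Proof.
move=> PQ; exact: (measurableT_comp (@measurable_ln R) (rnd_measurable P Q PQ)).
Qed.

Lemma expR_ge_max (u : R) : (Order.max u 0 <= expR u)%R.
Proof.
rewrite ge_max expR_ge0 andbT; apply: le_trans (expR_ge1Dx u).
by rewrite lerDr.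
Qed.

Lemma int_expR_Nln (P Q : probability T R) : P `<< Q ->
  \int[P]_x (expR (- ln (rnd P Q x)))%:E <= 1.
Proof.
move=> PQ; set N := [set x | rnd P Q x <= 0]%R.
have mN : measurable N by exact: rnd_le0_meas.
have mg : measurable_fun setT (fun x => (expR (- ln (rnd P Q x)))%:E).
  apply/measurable_EFinP.
  exact: (measurableT_comp (@measurable_expR R) (measurable_funN (ln_rnd_measurable P Q PQ))).
rewrite (ge0_negligible_integral mN measurableT mg (fun x _ => expR_ge0 _)
  (rnd_null P Q PQ)).
rewrite (rnd_cv P Q _ _ PQ (measurableD measurableT mN) (measurable_funTS mg));
  last by move=> x; rewrite lee_fin expR_ge0.
rewrite (eq_integral (cst 1)); last first.
  move=> x; rewrite inE /= => -[_ /negP]; rewrite -ltNge => fx.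
  by rewrite -EFinM expRN lnK ?mulVf ?gt_eqF // posrE.
rewrite integral_cst //; last exact: measurableD.
by rewrite mul1e probability_le1 //; exact: measurableD.
Qed.

Lemma KL_neqNy (P Q : probability T R) : KL P Q != -oo.
Proof.
case: (pselect (P `<< Q)) => PQ; last by rewrite /KL asboolF.
rewrite KLE // integralE.
set g := fun x => (ln (rnd P Q x))%:E.
have bfin : \int[P]_x g^\- x \is a fin_num.
  rewrite ge0_fin_numE; last exact: integral_ge0.
  apply: (le_lt_trans _ (ltry 1%R)); apply: le_trans (int_expR_Nln P Q PQ).
  apply: ge0_le_integral => //.
  - apply: measurable_funeneg; apply/measurable_EFinP; exact: ln_rnd_measurable.
  - apply/measurable_EFinP.
    exact: (measurableT_comp (@measurable_expR R) (measurable_funN (ln_rnd_measurable P Q PQ))).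
  - move=> x _; rewrite funenegE /g ge_max -EFinN !lee_fin expR_ge0 andbT.
    by apply: le_trans (expR_ge1Dx _); rewrite lerDr.
apply/negP => /eqP abNy.
have := leeB (integral_ge0 P (fun x _ => funepos_ge0 g x) : 0 <= \int[P]_x g^\+ x)
  (lexx (\int[P]_x g^\- x)).
rewrite abNy add0e leeNy_eq -(fineK bfin) -EFinN.
by [].
Qed.

End rn.

Section realfacts.
Context {R : realType}.

Lemma pt_bound (u c : R) : 0 < c -> u <= expR u / c - 1 + ln c.
Proof.
move=> c0; have := expR_ge1Dx (u - ln c).
rewrite expRB lnK ?posrE // => h; lra.
Qed.

Lemma real_opt (H K Y Z : R) : 0 <= Y -> Y <= Z ->
  (forall c, 0 < c -> H <= K + Y / c - 1 + ln c) -> H <= K + ln Z.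
Proof.
move=> Y0 YZ hc; have [Z0|] := ltP 0 Z.
  apply: le_trans (hc Z Z0) _.
  have : Y / Z <= 1 by rewrite ler_pdivrMr // mul1r.
  lra.
move=> Z0; have YZ0 : Y = 0 by apply/eqP; rewrite eq_le Y0 (le_trans YZ Z0).
have := hc (expR (H - K)) (expR_gt0 _); rewrite expRK YZ0 mul0r addr0.
by move=> h; exfalso; move: h; apply/negP; rewrite -ltNge; lra.
Qed.

End realfacts.

Section core.
Local Open Scope ereal_scope.
Context {R : realType} dX dZ (X : measurableType dX) (TZ : measurableType dZ).
Variables (P1 Q0 Q : probability X R) (mu mu' : probability TZ R) (pi : X -> TZ).
Hypotheses (mpi : measurable_fun setT pi) (P1Q0 : P1 `<< Q0) (mumu' : mu `<< mu').
Hypothesis push : pushforward P1 pi = mu :> (set TZ -> \bar R).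
Hypothesis HQ : forall g : X -> R, measurable_fun setT g ->
   \int[Q0]_x (expR (g x - ln (rnd mu mu' (pi x))))%:E <= \int[Q]_x (expR (g x))%:E.
Hypothesis KL1fin : KL P1 Q0 \is a fin_num.
Hypothesis KL2fin : KL mu mu' \is a fin_num.

Let L1 x := ln (rnd P1 Q0 x).
Let L2 x := ln (rnd mu mu' (pi x)).

Let mL1 : measurable_fun setT L1.
Proof. exact: ln_rnd_measurable. Qed.

Let mL2 : measurable_fun setT L2.
Proof. exact: (measurableT_comp (ln_rnd_measurable mu mu' mumu') mpi). Qed.

Let N := [set x | rnd P1 Q0 x <= 0]%R `|` pi @^-1` [set z | rnd mu mu' z <= 0]%R.

Let mN : measurable N.
Proof.
apply: measurableU; first exact: rnd_le0_meas.
rewrite -[X in measurable X]setTI; apply: mpi => //; exact: rnd_le0_meas.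
Qed.

Let P1N : P1 N = 0.
Proof.
apply/eqP; rewrite eq_le measure_ge0 andbT.
apply: le_trans (measureU2 _ _ _) _.
- exact: rnd_le0_meas.
- rewrite -[X in measurable X]setTI; apply: mpi => //; exact: rnd_le0_meas.
have h1 := rnd_null P1 Q0 P1Q0.
have h2 : pushforward P1 pi [set z | rnd mu mu' z <= 0]%R = 0.
  by rewrite push (rnd_null mu mu' mumu').
apply: (@le_trans _ _ (0 + 0)); last by rewrite adde0.
apply: leeD.
  by move: (lexx (0 : \bar R)); rewrite -{1}h1.
by move: (lexx (0 : \bar R)); rewrite -{1}h2.
Qed.

Let iL1 : P1.-integrable setT (EFin \o L1).
Proof.
apply: fin_integrable => //; first exact/measurable_EFinP.
by rewrite -KLE.
Qed.

Let intL1 : \int[P1]_x (L1 x)%:E = KL P1 Q0.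
Proof. by rewrite KLE. Qed.

Let iL2mu : mu.-integrable setT (fun z => (ln (rnd mu mu' z))%:E).
Proof.
apply: fin_integrable => //; first exact/measurable_EFinP/ln_rnd_measurable.
by rewrite -KLE.
Qed.

Let iL2 : P1.-integrable setT (EFin \o L2).
Proof.
apply/integrableP; split; first exact/measurable_EFinP.
have := iL2mu => /integrableP[_]; rewrite -push.
rewrite ge0_integral_pushforward //.
apply: measurableT_comp => //; apply/measurable_EFinP; exact: ln_rnd_measurable.
Qed.

Let intL2 : \int[P1]_x (L2 x)%:E = KL mu mu'.
Proof.
rewrite KLE // -push integral_pushforward //.
apply/measurable_EFinP; exact: ln_rnd_measurable.
Qed.

Variable h : X -> R.
Hypothesis mh : measurable_fun setT h.
Hypothesis Zfin : \int[Q]_x (expR (h x))%:E < +oo.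

Let y x := expR (h x - L1 x - L2 x).

Let my : measurable_fun setT y.
Proof.
exact: (measurableT_comp (@measurable_expR R) (measurable_funB (measurable_funB mh mL1) mL2)).
Qed.

Let intY : \int[P1]_x (y x)%:E <= \int[Q]_x (expR (h x))%:E.
Proof.
have mEy : measurable_fun setT (fun x => (y x)%:E) by exact/measurable_EFinP.
rewrite (ge0_negligible_integral mN measurableT mEy (fun x _ => expR_ge0 _) P1N).
rewrite (rnd_cv P1 Q0 _ _ P1Q0 (measurableD measurableT mN) (measurable_funTS mEy));
  last by move=> x; rewrite lee_fin expR_ge0.
rewrite (eq_integral (fun x => (expR (h x - L2 x))%:E)); last first.
  move=> x; rewrite inE => -[_ /not_orP[/negP + _]]; rewrite -ltNge => f1pos.
  rewrite -EFinM /y /L1; congr EFin.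
  rewrite (addrAC (h x)) [in LHS]expRB [in LHS]lnK ?posrE //.
 by rewrite divfK // gt_eqF.
apply: le_trans (HQ h mh).
apply: ge0_subset_integral => //; first exact: measurableD.
apply/measurable_EFinP.
exact: (measurableT_comp (@measurable_expR R) (measurable_funB mh mL2)).
Qed.

Let iy : P1.-integrable setT (EFin \o y).
Proof.
apply/integrableP; split; first exact/measurable_EFinP.
rewrite (eq_integral (fun x => (y x)%:E)); last first.
  by move=> x _; apply: gee0_abs; rewrite lee_fin; exact: expR_ge0.
exact: le_lt_trans intY Zfin.
Qed.

Let B (c : R) x := (L1 x + L2 x + c^-1 * y x + (ln c - 1))%R.

Let hB c : (0 < c)%R -> forall x, (h x <= B c x)%R.
Proof.
move=> c0 x; have := pt_bound (h x - L1 x - L2 x) c c0; rewrite /B /y; lra.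
Qed.

Let iB c : P1.-integrable setT (EFin \o B c).
Proof.
exact: (integrableD measurableT (integrableD measurableT
  (integrableD measurableT iL1 iL2) (integrableZl measurableT (c^-1) iy))
  (finite_measure_integrable_cst P1 (ln c - 1) measurableT)).
Qed.

Let intB c : \int[P1]_x (B c x)%:E =
  KL P1 Q0 + KL mu mu' + (c^-1)%:E * \int[P1]_x (y x)%:E + (ln c - 1)%:E.
Proof.
change (\int[P1]_x ((L1 x)%:E + (L2 x)%:E + (c^-1)%:E * (y x)%:E + (ln c - 1)%:E) =
  KL P1 Q0 + KL mu mu' + (c^-1)%:E * \int[P1]_x (y x)%:E + (ln c - 1)%:E).
rewrite integralD //; last exact: (finite_measure_integrable_cst P1 (ln c - 1) measurableT).
  rewrite integralD //; last exact: (integrableZl measurableT (c^-1) iy).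
    rewrite integralD // integralZl // intL1 intL2.
    rewrite integral_cst //; congr (_ + _); rewrite -[RHS]mule1; congr (_ * _).
    exact: probability_setT.
  exact: (integrableD measurableT iL1 iL2).
exact: (integrableD measurableT (integrableD measurableT iL1 iL2) (integrableZl measurableT (c^-1) iy)).
Qed.

Lemma core_ineq : ((exists k, forall x, (k <= h x)%R) \/ P1.-integrable setT (EFin \o h)) ->
  P1.-integrable setT (EFin \o h) /\
  \int[P1]_x (h x)%:E <= KL P1 Q0 + KL mu mu' + (ln (fine (\int[Q]_x (expR (h x))%:E)))%:E.
Proof.
move=> hyp.
have ih : P1.-integrable setT (EFin \o h).
  case: hyp => [[k hk]|//].
  have ig : P1.-integrable setT (EFin \o (fun x => `|B 1 x| + `|k|)%R).
    exact: (integrableD measurableT (integrable_abse (iB 1))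
      (finite_measure_integrable_cst P1 `|k| measurableT)).
  apply: (le_integrable measurableT _ _ ig); first exact/measurable_EFinP.
  move=> x _; rewrite /comp !abse_EFin lee_fin.
  rewrite [X in (_ <= X)%R]ger0_norm; last by rewrite addr_ge0.
  have := hB 1%R ltr01 x; have := hk x.
  have := ler_norm (B 1%R x); have := ler_norm (- k); rewrite normrN.
  have := ler_norm (- B 1%R x); rewrite normrN.
  have := normr_ge0 (B 1%R x); have := normr_ge0 k.
  rewrite ler_norml => *; apply/andP; split; lra.
split => //.
have Zq0 : 0 <= \int[Q]_x (expR (h x))%:E.
  by apply: integral_ge0 => x _; rewrite lee_fin expR_ge0.
have Zqfin : \int[Q]_x (expR (h x))%:E \is a fin_num by rewrite ge0_fin_numE.
have Hfin := integrable_fin_num measurableT ih.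
have Yfin := integrable_fin_num measurableT iy.
rewrite -(fineK KL1fin) -(fineK KL2fin) -(fineK Hfin).
rewrite -[(fine (KL P1 Q0))%:E + _]EFinD -EFinD lee_fin.
apply: (@real_opt R _ _ (fine (\int[P1]_x (y x)%:E))).
- by apply: fine_ge0; apply: integral_ge0 => x _; rewrite lee_fin expR_ge0.
- exact: fine_le.
move=> c c0.
have := le_integral measurableT ih (iB c) (fun x _ => (hB c c0 x : (h x)%:E <= (B c x)%:E)).
rewrite intB -(fineK KL1fin) -(fineK KL2fin) -(fineK Hfin) -(fineK Yfin).
rewrite -!EFinM -!EFinD lee_fin => H; lra.
Qed.

End core.

Section prod.
Local Open Scope ereal_scope.
Context {R : realType} dW dZ (TW : measurableType dW) (TZ : measurableType dZ).

Lemma inner_bound (mu mu' : probability TZ R) (f : TZ -> R) : mu `<< mu' ->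
  measurable_fun setT f ->
  \int[mu]_z (expR (f z - ln (rnd mu mu' z)))%:E <= \int[mu']_z (expR (f z))%:E.
Proof.
move=> mm mf.
set N := [set z | rnd mu mu' z <= 0]%R.
have mN : measurable N by exact: rnd_le0_meas.
have mg : measurable_fun setT (fun z => (expR (f z - ln (rnd mu mu' z)))%:E).
  apply/measurable_EFinP.
  exact: (measurableT_comp (@measurable_expR R) (measurable_funB mf (ln_rnd_measurable mu mu' mm))).
rewrite (ge0_negligible_integral mN measurableT mg (fun x _ => expR_ge0 _) (rnd_null mu mu' mm)).
rewrite (rnd_cv mu mu' _ _ mm (measurableD measurableT mN) (measurable_funTS mg));
  last by move=> x; rewrite lee_fin expR_ge0.
rewrite (eq_integral (fun z => (expR (f z))%:E)); last first.
  move=> z; rewrite inE => -[_ /negP]; rewrite -ltNge => fpos.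
  by rewrite -EFinM [in LHS]expRB [in LHS]lnK ?posrE // divfK // gt_eqF.
apply: ge0_subset_integral => //; first exact: measurableD.
apply/measurable_EFinP.
exact: (measurableT_comp (@measurable_expR R) mf).
Qed.

Lemma prodHQ (PW : probability TW R) (nu mu mu' : probability TZ R) :
  (forall A, measurable A -> nu A = mu A) -> mu `<< mu' ->
  forall g : TW * TZ -> R, measurable_fun setT g ->
  \int[PW \x nu]_x (expR (g x - ln (rnd mu mu' x.2)))%:E <=
  \int[PW \x mu']_x (expR (g x))%:E.
Proof.
move=> numu mm g mg.
have mL : measurable_fun setT (fun x : TW * TZ => ln (rnd mu mu' x.2)).
  exact: (measurableT_comp (ln_rnd_measurable mu mu' mm) measurable_snd).
have m1 : measurable_fun setT (fun x : TW * TZ => (expR (g x - ln (rnd mu mu' x.2)))%:E).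
  apply/measurable_EFinP.
  exact: (measurableT_comp (@measurable_expR R) (measurable_funB mg mL)).
have m2 : measurable_fun setT (fun x : TW * TZ => (expR (g x))%:E).
  apply/measurable_EFinP; exact: (measurableT_comp (@measurable_expR R) mg).
rewrite (fubini_tonelli1 _ m1); last by move=> x; rewrite lee_fin expR_ge0.
rewrite (fubini_tonelli1 _ m2); last by move=> x; rewrite lee_fin expR_ge0.
apply: ge0_le_integral => //.
- by move=> w _; apply: integral_ge0 => z _; rewrite lee_fin expR_ge0.
- by apply: measurable_fun_fubini_tonelli_F => // x; rewrite lee_fin expR_ge0.
- by apply: measurable_fun_fubini_tonelli_F => // x; rewrite lee_fin expR_ge0.
move=> w _; rewrite /fubini_F /=.
rewrite (eq_measure_integral mu); last by move=> A mA _; exact: numu.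
apply: inner_bound => //.
exact: (measurableT_comp mg (pair1_measurable w)).
Qed.

End prod.

Section infs.
Local Open Scope ereal_scope.
Context {R : realType}.

Lemma minus_bound (psi : R -> R) bm x (v : R) :
  (forall lam, (0 < lam < - bm)%R -> (lam * v)%:E <= x + (psi (- lam))%:E) ->
  v%:E <= psi_star_inv_minus psi bm x.
Proof.
move=> H; apply: le_ereal_inf_tmp => _ [lam /= /andP[l0 l1] <-].
rewrite lee_pdivlMr // -EFinM mulrC; apply: H; exact/andP.
Qed.

Lemma plus_bound (psi : R -> R) bp x (v : R) :
  (forall lam, (0 < lam < bp)%R -> (lam * v)%:E <= x + (psi lam)%:E) ->
  v%:E <= psi_star_inv_plus psi bp x.
Proof.
move=> H; apply: le_ereal_inf_tmp => _ [lam /= /andP[l0 l1] <-].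
rewrite lee_pdivlMr // -EFinM mulrC; apply: H; exact/andP.
Qed.

Lemma minus_y (psi : R -> R) bm x :
  (forall lam, (0 < lam < - bm)%R -> x + (psi (- lam))%:E = +oo) ->
  psi_star_inv_minus psi bm x = +oo.
Proof.
move=> H; apply/eqP; rewrite eq_le leey /=.
apply: le_ereal_inf_tmp => _ [lam /= /andP[l0 l1] <-].
by rewrite H ?l0 // gt0_mulye // lte_fin invr_gt0.
Qed.

Lemma plus_y (psi : R -> R) bp x :
  (forall lam, (0 < lam < bp)%R -> x + (psi lam)%:E = +oo) ->
  psi_star_inv_plus psi bp x = +oo.
Proof.
move=> H; apply/eqP; rewrite eq_le leey /=.
apply: le_ereal_inf_tmp => _ [lam /= /andP[l0 l1] <-].
by rewrite H ?l0 // gt0_mulye // lte_fin invr_gt0.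
Qed.

Lemma sum_eqy n (b : 'I_n -> \bar R) (r : 'I_n -> R) j :
  (forall k, (r k)%:E <= b k) -> b j = +oo -> \sum_(k < n) b k = +oo.
Proof.
move=> rb bj; rewrite (bigD1 j) //= bj addye //.
have : \sum_(k < n | k != j) (r k)%:E <= \sum_(k < n | k != j) b k.
  by apply: lee_sum => k _.
rewrite sumEFin; apply: contraTneq => ->; by rewrite leeNy_eq.
Qed.

End infs.

Section main.
Local Open Scope ereal_scope.
Variables (R : realType) (dO dW dZ : measure_display) (Omega : measurableType dO)
  (TW : measurableType dW) (TZ : measurableType dZ) (P : probability Omega R)
  (n : nat) (mu mu' : probability TZ R) (mu_ll : mu `<< mu')
  (Z : 'I_n -> {mfun Omega >-> TZ})
  (Z_law : forall i, distribution P (Z i) = mu :> (set TZ -> \bar R))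
  (W : {mfun Omega >-> TW}) (loss : TW -> TZ -> R)
  (loss_ge0 : forall w z, (0 <= loss w z)%R)
  (loss_meas : measurable_fun [set: (TW * TZ)%type] (fun p => loss p.1 p.2))
  (bm bp : R) (psi : R -> R).

Let m := fine (\int[(distribution P W \x mu')%E]_p (loss p.1 p.2)%:E)%E.

Hypothesis cgf_bound : forall lam, (bm < lam < bp)%R ->
     let Q := (distribution P W \x mu')%E in
     let m := fine (\int[Q]_p (loss p.1 p.2)%:E)%E in
     (\int[Q]_p (expR (lam * (loss p.1 p.2 - m)))%:E < +oo)%E /\
     (ln (fine (\int[Q]_p (expR (lam * (loss p.1 p.2 - m)))%:E)%E) <= psi lam)%R.

Let A i := \int[P]_om (loss (W om) (Z i om))%:E.

Let A_ge0 i : 0 <= A i.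
Proof. by apply: integral_ge0 => om _; rewrite lee_fin. Qed.

Let AE i : \int[distribution P (pairRV W (Z i))]_p (loss p.1 p.2)%:E = A i.
Proof.
rewrite (ge0_integral_distribution (pairRV W (Z i))) //.
  exact/measurable_EFinP.
by move=> p; rewrite lee_fin.
Qed.

Lemma per_i (i : 'I_n) (t : R) : (bm < t < bp)%R -> t != 0%R ->
  t%:E * (A i - m%:E) <= mutual_info P W (Z i) + KL mu mu' + (psi t)%:E.
Proof.
move=> tb t0.
rewrite /mutual_info.
set Pj := distribution P (pairRV W (Z i)).
set Q0 := (distribution P W \x distribution P (Z i))%E.
have InNy := KL_neqNy Pj Q0.
have DnNy := KL_neqNy mu mu'.
case: (boolP (KL Pj Q0 == +oo)) => [/eqP ->|Ioo].
  by rewrite addye // addye // leey.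
case: (boolP (KL mu mu' == +oo)) => [/eqP ->|Doo].
  by rewrite addey // addye // leey.
have Ifin : KL Pj Q0 \is a fin_num by rewrite fin_numE InNy Ioo.
have Dfin : KL mu mu' \is a fin_num by rewrite fin_numE DnNy Doo.
have PjQ0 : Pj `<< Q0.
  by move: Ioo; rewrite /KL; case: (asboolP (Pj `<< Q0)).
pose h := fun p : TW * TZ => (t * (loss p.1 p.2 - m))%R.
have mh : measurable_fun setT h.
  exact: (measurable_funM (measurable_cst t) (measurable_funB loss_meas (measurable_cst m))).
have push : pushforward Pj snd = mu :> (set TZ -> \bar R).
  by rewrite -(Z_law i).
have numu : forall B, measurable B -> distribution P (Z i) B = mu B.
  by move=> B _; rewrite -(Z_law i).
have HQ := prodHQ _ _ _ _ (distribution P W) _ _ _ numu mu_ll.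
have [Zfin lnpsi] := cgf_bound t tb.
have mlossE : measurable_fun setT (fun p : TW * TZ => (loss p.1 p.2)%:E).
  exact/measurable_EFinP.
have icst := finite_measure_integrable_cst Pj m measurableT.
have finish : ((exists k, forall p, (k <= h p)%R) \/ Pj.-integrable setT (EFin \o h)) ->
    t%:E * (A i - m%:E) <= KL Pj Q0 + KL mu mu' + (psi t)%:E.
  move=> hyp.
  have [ih hle] := @core_ineq R _ _ _ _ Pj Q0 (distribution P W \x mu')%E mu mu' snd
    measurable_snd PjQ0 mu_ll push HQ Ifin Dfin h mh Zfin hyp.
  have iloss : Pj.-integrable setT (fun p => (loss p.1 p.2)%:E).
    apply: (eq_integrable measurableT _ _ _ (integrableD measurableT (integrableZl measurableT (t^-1) ih) icst)).
    by move=> p _; rewrite /= /h -EFinM -EFinD mulKf // subrK.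
  have -> : t%:E * (A i - m%:E) = \int[Pj]_p (h p)%:E.
    change (t%:E * (A i - m%:E) = \int[Pj]_p (t%:E * ((loss p.1 p.2)%:E - m%:E))).
    rewrite integralZl //; last exact: (integrableB measurableT iloss icst).
    rewrite (integralB measurableT iloss icst).
    rewrite AE; congr (_ * (_ - _)).
    rewrite (eq_integral (cst m%:E)) // integral_cst //.
    rewrite -[LHS]mule1; congr (_ * _); exact/esym/probability_setT.
  apply: le_trans hle _; apply: leeD; first exact: lexx.
  rewrite lee_fin; exact: lnpsi.
have [tlt0|tgt0] : (t < 0)%R \/ (0 < t)%R.
  by move: t0; rewrite neq_lt => /orP[]; [left|right].
  case: (boolP (A i == +oo)) => [/eqP Ay|Ay].
    by rewrite Ay addye // lt0_muley ?lte_fin // leNye.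
  apply: finish; right.
  have iloss : Pj.-integrable setT (fun p => (loss p.1 p.2)%:E).
    apply/integrableP; split => //.
    rewrite (eq_integral (fun p => (loss p.1 p.2)%:E)); last first.
      by move=> p _; rewrite abse_EFin ger0_norm.
    by rewrite AE ltey.
  apply: (eq_integrable measurableT _ _ _ (integrableZl measurableT t (integrableB measurableT iloss icst))).
  by move=> p _.
apply: finish; left; exists (- (t * m))%R => p; rewrite /h.
have := mulr_ge0 (ltW tgt0) (loss_ge0 p.1 p.2); lra.
Qed.

Hypotheses (bm_lt0 : (bm < 0)%R) (bp_gt0 : (0 < bp)%R).

Let I i := mutual_info P W (Z i) + KL mu mu'.

Let lbm i : (m - fine (A i))%:E <= psi_star_inv_minus psi bm (I i).
Proof.
case: (boolP (A i == +oo)) => [/eqP Ay|Ay].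
  have b2 : (0 < bp / 2)%R by rewrite divr_gt0.
  have tb : (bm < bp / 2 < bp)%R.
    apply/andP; split; first exact: lt_trans bm_lt0 b2.
    by rewrite ltr_pdivrMr // ltr_pMr // ltr1n.
  have t0 : (bp / 2)%R != 0%R by rewrite gt_eqF // divr_gt0.
  have := per_i i _ tb t0.
  rewrite Ay addye // gt0_muley ?lte_fin ?divr_gt0 // leye_eq => /eqP HI.
  have HI' : I i = +oo.
    by move: HI; rewrite /I; case: (mutual_info P W (Z i) + KL mu mu').
  have -> : psi_star_inv_minus psi bm (I i) = +oo.
    by apply: minus_y => lam _; rewrite HI' addye.
  by rewrite leey.
have Afin : A i \is a fin_num by rewrite ge0_fin_numE // ltey.
apply: minus_bound => lam /andP[l0 l1].
have tb : (bm < - lam < bp)%R.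
  have := bp_gt0; have := bm_lt0; move: l0 l1 => l0 l1 *; apply/andP; split; lra.
have t0 : (- lam)%R != 0%R by rewrite oppr_eq0 gt_eqF.
have := per_i i _ tb t0.
rewrite -(fineK Afin) -EFinB -EFinM /I.
by have -> : (lam * (m - fine (A i)) = - lam * (fine (A i) - m))%R by ring.
Qed.

Let lbp i : (fine (A i) - m)%:E <= psi_star_inv_plus psi bp (I i).
Proof.
case: (boolP (A i == +oo)) => [/eqP Ay|Ay].
  suff -> : psi_star_inv_plus psi bp (I i) = +oo by rewrite leey.
  apply: plus_y => lam /andP[l0 l1].
  have tb : (bm < lam < bp)%R.
    have := bp_gt0; have := bm_lt0; move: l0 l1 => l0 l1 *; apply/andP; split; lra.
  have := per_i i _ tb (negbT (gt_eqF l0)).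
  by rewrite Ay addye // gt0_muley ?lte_fin // leye_eq => /eqP.
have Afin : A i \is a fin_num by rewrite ge0_fin_numE // ltey.
apply: plus_bound => lam /andP[l0 l1].
have tb : (bm < lam < bp)%R.
  have := bp_gt0; have := bm_lt0; move: l0 l1 => l0 l1 *; apply/andP; split; lra.
have := per_i i _ tb (negbT (gt_eqF l0)).
by rewrite -(fineK Afin) -EFinB -EFinM /I.
Qed.

Let bmy i : A i = +oo -> psi_star_inv_minus psi bm (I i) = +oo.
Proof.
move=> Ay.
have b2 : (0 < bp / 2)%R by rewrite divr_gt0.
have tb : (bm < bp / 2 < bp)%R.
  apply/andP; split; first exact: lt_trans bm_lt0 b2.
  by rewrite ltr_pdivrMr // ltr_pMr // ltr1n.
have t0 : (bp / 2)%R != 0%R by rewrite gt_eqF // divr_gt0.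
have := per_i i _ tb t0.
rewrite Ay addye // gt0_muley ?lte_fin ?divr_gt0 // leye_eq => /eqP HI.
have HI' : I i = +oo.
  by move: HI; rewrite /I; case: (mutual_info P W (Z i) + KL mu mu').
by apply: minus_y => lam _; rewrite HI' addye.
Qed.

Let bpy i : A i = +oo -> psi_star_inv_plus psi bp (I i) = +oo.
Proof.
move=> Ay; apply: plus_y => lam /andP[l0 l1].
have tb : (bm < lam < bp)%R.
  have := bp_gt0; have := bm_lt0; move: l0 l1 => l0 l1 *; apply/andP; split; lra.
have := per_i i _ tb (negbT (gt_eqF l0)).
by rewrite Ay addye // gt0_muley ?lte_fin // leye_eq => /eqP.
Qed.

Hypothesis n_gt0 : (0 < n)%N.
Hypothesis loss_int : (distribution P W \x mu')%E.-integrable [set: (TW * TZ)%type]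
                (fun p => (loss p.1 p.2)%:E).

Lemma main_result :
  let L_mu' := fun w => (\int[mu']_z (loss w z)%:E)%E in
  let L_hat := fun w (om : Omega) => (n%:R^-1 * \sum_(i < n) loss w (Z i om))%R in
  let gen := (\int[P]_om (L_mu' (W om) - (L_hat (W om) om)%:E))%E in
  (gen <= (n%:R^-1)%:E * \sum_(i < n)
            psi_star_inv_minus psi bm (mutual_info P W (Z i) + KL mu mu'))%E /\
  (- gen <= (n%:R^-1)%:E * \sum_(i < n)
            psi_star_inv_plus psi bp (mutual_info P W (Z i) + KL mu mu'))%E.
Proof.
move=> Lm Lh gen.
have n0 : (0 < n%:R^-1 :> R)%R by rewrite invr_gt0 ltr0n.
case: (pselect (exists j, A j = +oo)) => [[j Aj]|allfin].
  have Sm : \sum_(i < n) psi_star_inv_minus psi bm (I i) = +oo.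
    exact: (@sum_eqy R n (fun k => psi_star_inv_minus psi bm (I k)) (fun k => m - fine (A k))%R j lbm (bmy j Aj)).
  have Sp : \sum_(i < n) psi_star_inv_plus psi bp (I i) = +oo.
    exact: (@sum_eqy R n (fun k => psi_star_inv_plus psi bp (I k)) (fun k => fine (A k) - m)%R j lbp (bpy j Aj)).
  by move: Sm Sp; rewrite /I => -> ->; rewrite gt0_muley ?lte_fin // !leey.
have Afin i : A i \is a fin_num.
  rewrite ge0_fin_numE // ltey; apply/negP => /eqP Ay; apply: allfin; by exists i.
pose a i := fine (A i).
have mE : measurable_fun setT (fun p : TW * TZ => (loss p.1 p.2)%:E).
  exact/measurable_EFinP.
have f0 : forall p : TW * TZ, 0 <= (loss p.1 p.2)%:E by move=> p; rewrite lee_fin.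
have mLm : measurable_fun setT Lm.
  exact: (measurable_fun_fubini_tonelli_F (m2 := mu') _ mE f0).
have Lm0 w : 0 <= Lm w by apply: integral_ge0 => z _; rewrite lee_fin.
have intLm : \int[P]_om Lm (W om) = m%:E.
  transitivity (\int[distribution P W]_w Lm w).
    by rewrite (ge0_integral_distribution W).
  have H := fubini_tonelli1 (m1 := distribution P W) (m2 := mu') _ mE f0.
  transitivity (\int[(distribution P W \x mu')%E]_p (loss p.1 p.2)%:E).
    exact: (esym H).
  by rewrite /m fineK // integrable_fin_num.
have mLmW : measurable_fun setT (fun om => Lm (W om)).
  exact: (measurableT_comp mLm (measurable_funPT W)).
have iF : P.-integrable setT (fun om => Lm (W om)).
  apply/integrableP; split => //.
  rewrite (eq_integral (fun om => Lm (W om))); last by move=> om _; rewrite gee0_abs.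
  by rewrite intLm ltry.
have iGi i : P.-integrable setT (fun om => (loss (W om) (Z i om))%:E).
  apply/integrableP; split.
    apply/measurable_EFinP.
    exact: (measurableT_comp loss_meas (measurable_funPT (pairRV W (Z i)))).
  rewrite (eq_integral (fun om => (loss (W om) (Z i om))%:E)); last first.
    by move=> om _; rewrite abse_EFin ger0_norm.
  by rewrite -/(A i) -(fineK (Afin i)) ltry.
have iS : P.-integrable setT (fun om => \sum_(i < n) (loss (W om) (Z i om))%:E).
  by apply: integrable_sum => // i _; exact: iGi.
have iG : P.-integrable setT (fun om => (Lh (W om) om)%:E).
  apply: (eq_integrable measurableT _ _ _ (integrableZl measurableT (n%:R^-1) iS)).
  by move=> om _; rewrite /Lh EFinM sumEFin.
have gen_eq : gen = (m - n%:R^-1 * \sum_(i < n) a i)%:E.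
  rewrite /gen (integralB measurableT iF iG) intLm.
  rewrite (eq_integral (fun om => (n%:R^-1)%:E * \sum_(i < n) (loss (W om) (Z i om))%:E));
    last by move=> om _; rewrite /Lh EFinM sumEFin.
  rewrite (integralZl measurableT iS) integral_sum //.
  rewrite (eq_bigr (fun i => (a i)%:E)); last by move=> i _; rewrite /a fineK // -/(A i).
  by rewrite sumEFin -EFinM -EFinB.
have nz : (n%:R : R) != 0%R by rewrite pnatr_eq0 -lt0n.
have key : (m - n%:R^-1 * \sum_(i < n) a i = n%:R^-1 * \sum_(i < n) (m - a i))%R.
  rewrite sumrB sumr_const card_ord -mulr_natr; field.
  exact: nz.
split.
  rewrite gen_eq key EFinM -sumEFin.
  apply: lee_wpmul2l; first by rewrite lee_fin ltW.
  by apply: lee_sum => i _; exact: lbm.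
rewrite gen_eq -EFinN opprB.
have key2 : (n%:R^-1 * \sum_(i < n) a i - m = n%:R^-1 * \sum_(i < n) (a i - m))%R.
  rewrite sumrB sumr_const card_ord -mulr_natr; field.
  exact: nz.
rewrite key2 EFinM -sumEFin.
apply: lee_wpmul2l; first by rewrite lee_fin ltW.
by apply: lee_sum => i _; exact: lbp.
Qed.

End main.

Theorem corollary1 (R : realType)
  (dO dW dZ : measure_display) (Omega : measurableType dO)
  (TW : measurableType dW) (TZ : measurableType dZ)
  (P : probability Omega R)
  (n : nat) (n_gt0 : (0 < n)%N)
  (mu mu' : probability TZ R) (mu_ll : mu `<< mu')
  (Z : 'I_n -> {mfun Omega >-> TZ})
  (Z_law : forall i, distribution P (Z i) = mu :> (set TZ -> \bar R))
  (Z_indep : mutually_independent P Z)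
  (W : {mfun Omega >-> TW})
  (loss : TW -> TZ -> R)
  (loss_ge0 : forall w z, 0 <= loss w z)
  (loss_meas : measurable_fun [set: (TW * TZ)%type] (fun p => loss p.1 p.2))
  (bm bp : R) (bm_lt0 : bm < 0) (bp_gt0 : 0 < bp) (psi : R -> R)
  (loss_int : (distribution P W \x mu')%E.-integrable [set: (TW * TZ)%type]
                (fun p => (loss p.1 p.2)%:E))
  (cgf_bound : forall lam, bm < lam < bp ->
     let Q := (distribution P W \x mu')%E in
     let m := fine (\int[Q]_p (loss p.1 p.2)%:E)%E in
     (\int[Q]_p (expR (lam * (loss p.1 p.2 - m)))%:E < +oo)%E /\
     ln (fine (\int[Q]_p (expR (lam * (loss p.1 p.2 - m)))%:E)%E) <= psi lam) :
  let L_mu' := fun w => (\int[mu']_z (loss w z)%:E)%E in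
  let L_hat := fun w (om : Omega) => n%:R^-1 * \sum_(i < n) loss w (Z i om) in
  let gen := (\int[P]_om (L_mu' (W om) - (L_hat (W om) om)%:E))%E in
  (gen <= (n%:R^-1)%:E * \sum_(i < n)
            psi_star_inv_minus psi bm (mutual_info P W (Z i) + KL mu mu'))%E /\
  (- gen <= (n%:R^-1)%:E * \sum_(i < n)
            psi_star_inv_plus psi bp (mutual_info P W (Z i) + KL mu mu'))%E.
Proof.
Proof.
exact: (@main_result R dO dW dZ Omega TW TZ P n mu mu' mu_ll Z Z_law W loss loss_ge0
  loss_meas bm bp psi cgf_bound bm_lt0 bp_gt0 n_gt0 loss_int).
Qed.
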